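(* Let $n,m,T\in\mathbb{N}$, $u_{[0,T]}\in\mathbb{R}^{m(T+1)}$, and let $(A,B)\in\mathbb{R}^{n\times n}\times\mathbb{R}^{n\times m}$ be controllable. If $u_{[0,T-1]}$ is persistently exciting of order $n$, then the matrix $\mathcal{H}_1(x_{[0,T]})=\begin{bmatrix}x(0)&\cdots&x(T)\end{bmatrix}$ has full row rank $n$ for every state sequence $x_{[0,T]}$ satisfying $x(t+1)=Ax(t)+Bu(t)$ for all $t\in[0,T-1]$.
   Context: For $v:\mathbb{Z}_+\to\mathbb{R}^q$, $v_{[0,T-1]}=\begin{bmatrix}v(0)^\top & \cdots & v(T-1)^\top\end{bmatrix}^\top$. For $k\in[1,T]$ the Hankel matrix of depth $k$ is the $qk\times(T-k+1)$ block matrix $\mathcal{H}_k(v_{[0,T-1]})$ whose $(i,j)$ block ($i\in[0,k-1]$, $j\in[0,T-k]$) is $v(i+j)$. The sequence $v_{[0,T-1]}$ is persistently exciting of order $k$ if $k\le T$ and $\mathcal{H}_k(v_{[0,T-1]})$ has full row rank. *)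

(* Defs.v *)
From mathcomp Require Import all_boot all_order all_algebra.
Set Implicit Arguments. Unset Strict Implicit. Unset Printing Implicit Defensive.
Import Order.TTheory GRing.Theory Num.Theory.
Local Open Scope ring_scope.

Lemma mod_ord_proof (k q : nat) (r : 'I_(k * q)) : (r %% q < q)%N.
Proof.
case: q r => [|q] r; last by rewrite ltn_mod.
by case: r => r; rewrite muln0.
Qed.

Definition mod_ord (k q : nat) (r : 'I_(k * q)) : 'I_q := Ordinal (mod_ord_proof r).

(* Hankel matrix of depth k of v_[0,T-1] (v : nat -> R^q as column vectors):
   the (qk) x (T-k+1) block matrix whose (i,j) block is v(i+j).
   Row index r corresponds to block i = r %/ q and component r %% q. *)
Definition hankel (R : nzRingType) (q : nat) (k : nat) (v : nat -> 'cV[R]_q) (T : nat)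
  : 'M[R]_(k * q, T - k + 1) :=
  \matrix_(r < k * q, j < T - k + 1) v (r %/ q + j)%N (mod_ord r) ord0.

Definition persistently_exciting (R : fieldType) (q : nat) (k : nat)
  (v : nat -> 'cV[R]_q) (T : nat) : Prop :=
  (k <= T)%N /\ row_free (hankel k v T).

(* Kalman controllability matrix [B  AB  ...  A^(n-1) B] : n x (n m). *)
Definition ctrb_mx (R : nzRingType) (n m : nat) (A : 'M[R]_n) (B : 'M[R]_(n, m))
  : 'M[R]_(n, n * m) :=
  \matrix_(i < n, c < n * m) (A ^+ (c %/ m) *m B) i (mod_ord c).

Definition controllable (R : fieldType) (n m : nat) (A : 'M[R]_n) (B : 'M[R]_(n, m))
  : Prop := \rank (ctrb_mx A B) = n.

(* Main.v *)
Require Import Defs.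
From mathcomp Require Import all_boot all_order all_algebra.
From mathcomp Require Import zify.
Set Implicit Arguments. Unset Strict Implicit. Unset Printing Implicit Defensive.
Import GRing.Theory Num.Theory.
Local Open Scope ring_scope.

Fixpoint Pm (R : fieldType) n (A : 'M[R]_n) (a : nat -> R) (N j : nat) : 'M[R]_n :=
  match j with 0 => 1%:M | j'.+1 => Pm A a N j' *m A + (a (N - j'.+1)%N)%:M end.

Fixpoint qv (R : fieldType) n (x : nat -> 'cV[R]_n) (a : nat -> R) (N j t : nat) : 'cV[R]_n :=
  match j with 0 => x t | j'.+1 => a (N - j'.+1)%N *: x t + qv x a N j' t.+1 end.

Lemma qv_expand (R : fieldType) n m T (A : 'M[R]_n) (B : 'M[R]_(n, m)) u x a N :
  (forall t : nat, (t < T)%N -> x t.+1 = A *m x t + B *m u t) ->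
  forall j t, (t + j <= T)%N ->
  qv x a N j t = Pm A a N j *m x t + \sum_(i < j) Pm A a N (j - i.+1) *m B *m u (t + i)%N.
Proof.
move=> dyn; elim=> [|j IH] t Ht /=.
  by rewrite big_ord0 addr0 mul1mx.
rewrite IH; last by lia.
rewrite dyn; last by lia.
rewrite big_ord_recl /= subn1 /= addn0.
under [X in _ = _ + (_ + X)]eq_bigr => i _ do rewrite /bump /= add1n subSS addnS.
rewrite mulmxDr mulmxDl mul_scalar_mx !mulmxA !addrA; congr (_ + _).
by congr (_ + _); rewrite addrC.
Qed.

Lemma qv_zero (R : fieldType) n T (x : nat -> 'cV[R]_n) a N (xi : 'rV[R]_n) :
  (forall t, (t <= T)%N -> xi *m x t = 0) ->
  forall j t, (t + j <= T)%N -> xi *m qv x a N j t = 0.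
Proof.
move=> H; elim=> [|j IH] t Ht /=; first by rewrite H // -(addn0 t).
rewrite mulmxDr -scalemxAr H; last by apply: leq_trans Ht; rewrite leq_addr.
by rewrite scaler0 add0r IH // addSnnS.
Qed.

Lemma exprSmx (R : fieldType) n (A : 'M[R]_n) j : A ^+ j *m A = A ^+ j.+1.
Proof. by rewrite exprSr. Qed.

Lemma Pm_form (R : fieldType) n (A : 'M[R]_n) a N j :
  exists c : nat -> R, Pm A a N j = A ^+ j + \sum_(l < j) c l *: A ^+ l.
Proof.
elim: j => [|j [c Hc]] /=; first by exists (fun _ => 0); rewrite big_ord0 addr0 expr0.
exists (fun l => if l is l'.+1 then c l' else a (N - j.+1)%N).
rewrite Hc big_ord_recl /= expr0 mulmxDl mulmx_suml exprSmx.
rewrite (eq_bigr (fun i : 'I_j => c i *: A ^+ i.+1)); last by move=> i _; rewrite -scalemxAl exprSmx.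
rewrite -addrA; congr (_ + _); rewrite addrC; congr (_ + _).
by rewrite -scalemx1.
Qed.
Lemma mkidx_proof k q (i : 'I_k) (c : 'I_q) : (i * q + c < k * q)%N.
Proof.
case: i c => i Hi [c Hc] /=.
have H1 : (i * q + c < i.+1 * q)%N by rewrite mulSn addnC ltn_add2r.
apply: (leq_trans H1); rewrite leq_mul2r; by rewrite Hi orbT.
Qed.

Definition mkidx k q (i : 'I_k) (c : 'I_q) : 'I_(k * q) := Ordinal (mkidx_proof i c).

Lemma mkidx_div k q (i : 'I_k) (c : 'I_q) : (mkidx i c %/ q)%N = i.
Proof. case: c => c Hc /=. rewrite divnMDl ?divn_small ?addn0 //. by case: q Hc. Qed.

Lemma mkidx_mod k q (i : 'I_k) (c : 'I_q) : mod_ord (mkidx i c) = c.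
Proof. apply: val_inj => /=. case: c => c Hc /=. by rewrite modnMDl modn_small. Qed.

Lemma div_ord_proof k q (r : 'I_(k * q)) : (r %/ q < k)%N.
Proof. case: r => r /= Hr. rewrite ltn_divLR //. case: q Hr => //. by rewrite muln0. Qed.

Lemma mkidxK k q (r : 'I_(k * q)) : mkidx (Ordinal (div_ord_proof r)) (mod_ord r) = r.
Proof. apply: val_inj => /=. by rewrite -divn_eq. Qed.

Lemma big_split_idx (Rg : nmodType) k q (G : 'I_(k * q) -> Rg) :
  \sum_(r < k * q) G r = \sum_(i < k) \sum_(c < q) G (mkidx i c).
Proof.
rewrite pair_big /=.
rewrite (reindex (fun r : 'I_(k*q) => (Ordinal (div_ord_proof r), mod_ord r))) /=.
  by apply: eq_bigr => r _; rewrite mkidxK.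
exists (fun p : 'I_k * 'I_q => mkidx p.1 p.2) => [r _|[i c] _] /=.
  by rewrite mkidxK.
congr pair; last by rewrite mkidx_mod.
by apply: val_inj; rewrite /= mkidx_div.
Qed.

Lemma Pm_sum (R : fieldType) n (A : 'M[R]_n) a N j : a N = 1 -> (j <= N)%N ->
  Pm A a N j = \sum_(l < j.+1) a (N - j + l)%N *: A ^+ l.
Proof.
move=> aN; elim: j => [|j IH] Hj /=.
  by rewrite big_ord_recl big_ord0 addr0 expr0 subn0 addn0 aN scale1r.
rewrite IH; last by lia.
rewrite [RHS]big_ord_recl /= expr0 addn0 scalemx1 addrC mulmx_suml; congr (_ + _).
apply: eq_bigr => i _; rewrite -scalemxAl exprSmx /bump /= add1n.
by congr (a _ *: _); lia.
Qed.

Lemma Pm_CH (R : fieldType) n' (A : 'M[R]_n'.+1) :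
  Pm A (fun l => (char_poly A)`_l) n'.+1 n'.+1 = 0.
Proof.
rewrite Pm_sum //; last first.
  have /monicP := char_poly_monic A.
  by rewrite lead_coefE size_char_poly.
have := Cayley_Hamilton A.
rewrite /horner_mx /horner_morph (@horner_coef_wide _ n'.+2); last first.
  rewrite -(size_char_poly A); exact: size_poly.
move=> H; rewrite -[RHS]H; apply: eq_bigr => i _.
rewrite coef_map /= subnn add0n -mul_scalar_mx.
by [].
Qed.

Lemma ctrb_zero (R : fieldType) n m (A : 'M[R]_n) (B : 'M[R]_(n, m)) (xi : 'rV_n) :
  controllable A B -> (forall j, (j < n)%N -> xi *m A ^+ j *m B = 0) -> xi = 0.
Proof.
move=> Hc Hj.
have rf : row_free (ctrb_mx A B) by rewrite /row_free Hc.
apply: (row_free_inj rf); rewrite mul0mx.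
apply/rowP => c; rewrite !mxE.
have := Hj _ (div_ord_proof c) => /(congr1 (fun M : 'rV_m => M 0 (mod_ord c))).
rewrite /= -mulmxA [in X in X = _]mxE mxE => H; rewrite -[RHS]H; apply: eq_bigr => i _.
by rewrite /ctrb_mx mxE.
Qed.

Lemma core (R : fieldType) n' m T (A : 'M[R]_n'.+1) (B : 'M[R]_(n'.+1, m))
  (u : nat -> 'cV[R]_m) (x : nat -> 'cV[R]_n'.+1) (xi : 'rV[R]_n'.+1) :
  controllable A B -> persistently_exciting n'.+1 u T ->
  (forall t : nat, (t < T)%N -> x t.+1 = A *m x t + B *m u t) ->
  (forall t, (t <= T)%N -> xi *m x t = 0) -> xi = 0.
Proof.
set n := n'.+1 => Hc [HnT Hpe] dyn Hx.
set a := fun l => (char_poly A)`_l.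
have PE0 : Pm A a n n = 0 by exact: Pm_CH.
have HB : forall i : 'I_n, xi *m Pm A a n (n - i.+1)%N *m B = 0.
  pose w : 'rV_(n * m) := \row_(r < n * m) (xi *m Pm A a n (n - (r %/ m).+1)%N *m B) 0 (mod_ord r).
  have w0 : w = 0.
    apply: (row_free_inj Hpe); rewrite mul0mx.
    apply/rowP => j; rewrite [RHS]mxE mxE big_split_idx.
    have Hj : (j + n <= T)%N by case: j => j /=; lia.
    have := qv_zero a n Hx Hj; rewrite (qv_expand a n dyn Hj) PE0 mul0mx add0r.
    move/(congr1 (fun M : 'cV_1 => M 0 0)); rewrite mulmx_sumr summxE [RHS]mxE => H.
    rewrite -[RHS]H; apply: eq_bigr => i _; rewrite !mulmxA mxE; apply: eq_bigr => c _.
    by rewrite !mxE mkidx_div mkidx_mod addnC.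
  move=> i; apply/rowP => c; have := congr1 (fun M : 'rV_(n * m) => M 0 (mkidx i c)) w0.
  by rewrite /= !mxE mkidx_div mkidx_mod.
have HC : forall J j, (j < J)%N -> (j < n)%N -> xi *m A ^+ j *m B = 0.
  elim=> [|J IH] j // HjJ Hjn.
  have [c Hcf] := Pm_form A a n j.
  have Hi : (n' - j < n)%N by rewrite ltnS leq_subr.
  have := HB (Ordinal Hi); rewrite /= (_ : (n - (n' - j).+1 = j)%N); last by rewrite /n; lia.
  rewrite Hcf mulmxDr mulmxDl mulmx_sumr mulmx_suml big1 ?addr0 //.
  move=> l _; rewrite -scalemxAr -scalemxAl IH ?scaler0 //.
    by case: l => l /=; lia.
  by case: l => l /=; lia.
apply: (ctrb_zero Hc) => j Hj; exact: (HC j.+1).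
Qed.

Unset Implicit Arguments.

Theorem proposition2 (R : realFieldType) (n m T : nat)
  (u : nat -> 'cV[R]_m) (A : 'M[R]_n) (B : 'M[R]_(n, m)) :
  controllable A B ->
  persistently_exciting n u T ->
  forall x : nat -> 'cV[R]_n,
    (forall t : nat, (t < T)%N -> x t.+1 = A *m x t + B *m u t) ->
    row_free (hankel 1 x T.+1).
Proof.
move=> Hc Hpe x dyn.
rewrite -kermx_eq0; apply/eqP/row_matrixP => i; rewrite row0.
have Hv : row i (kermx (hankel 1 x T.+1)) *m hankel 1 x T.+1 = 0.
  by rewrite -row_mul mulmx_ker row0.
move: (row i _) Hv => v Hv; clear i.
move: A B Hc Hpe x dyn v Hv; case: n => [|n'] A B Hc Hpe x dyn v Hv.
  by apply/rowP => r; exfalso; case: r => r; rewrite muln0.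
pose xi : 'rV_n'.+1 := \row_(c < n'.+1) v 0 (mkidx (ord0 : 'I_1) c).
have Hx : forall t, (t <= T)%N -> xi *m x t = 0.
  move=> t Ht; have Ht' : (t < T.+1 - 1 + 1)%N by lia.
  have := congr1 (fun M : 'rV_(T.+1 - 1 + 1) => M 0 (Ordinal Ht')) Hv.
  rewrite /= [RHS]mxE mxE big_split_idx big_ord1 => H.
  apply/rowP => j; rewrite ord1 [RHS]mxE mxE -[RHS]H; apply: eq_bigr => c _.
  by rewrite !mxE mkidx_div mkidx_mod.
have xi0 := core Hc Hpe dyn Hx.
apply/rowP => r; rewrite -(mkidxK r) mxE.
have -> : Ordinal (div_ord_proof r) = ord0 by apply: ord1.
have := congr1 (fun M : 'rV_n'.+1 => M 0 (mod_ord r)) xi0.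
by rewrite /= !mxE.
Qed.
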